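(* Let $(X,\|\cdot\|_X)$ be a Banach space and $\mathcal{K}\subset X$ compact. Then for every $n_0\in\mathbb{N}\cup\{0\}$ and every $\gamma\ge d_{n_0}(\mathcal{K})_X+\mathrm{rad}(\mathcal{K})$ we have $\lim_{n\to\infty}d_n^\gamma(\mathcal{K})_X=0$.
   Context: $\mathrm{rad}(\mathcal{K})=\inf_{g\in X}\sup_{f\in\mathcal{K}}\|f-g\|_X$. The Kolmogorov widths are $d_0(\mathcal{K})_X=\sup_{f\in\mathcal{K}}\|f\|_X$ and, for $n\ge1$, $d_n(\mathcal{K})_X=\inf_{\dim X_n=n}\sup_{f\in\mathcal{K}}\mathrm{dist}(f,X_n)_X$, infimum over linear subspaces $X_n\subset X$ of dimension $n$. For $k\ge1$ and a norm $\|\cdot\|_{Y_k}$ on $\mathbb{R}^k$ let $B_{Y_k}=\{y\in\mathbb{R}^k:\|y\|_{Y_k}\le1\}$; $d^\gamma(\mathcal{K},Y_k)_X=\inf_{\Phi}\sup_{f\in\mathcal{K}}\inf_{y\in B_{Y_k}}\|f-\Phi(y)\|_X$, the infimum over all maps $\Phi:B_{Y_k}\to X$ with $\|\Phi(y)-\Phi(y')\|_X\le\gamma\|y-y'\|_{Y_k}$; and the Lipschitz width is $d_n^\gamma(\mathcal{K})_X=\inf_{1\le k\le n}\inf_{\|\cdot\|_{Y_k}}d^\gamma(\mathcal{K},Y_k)_X$, the inner infimum over all norms on $\mathbb{R}^k$. *)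

(* Defs.v *)
From HB Require Import structures.
From mathcomp Require Import all_boot all_order all_algebra.
From mathcomp Require Import all_classical all_reals all_analysis.
Set Implicit Arguments. Unset Strict Implicit. Unset Printing Implicit Defensive.
Import Order.TTheory GRing.Theory Num.Theory.
Import numFieldNormedType.Exports.
Local Open Scope classical_set_scope.
Local Open Scope ring_scope.

Section Widths.
Context {R : realType} {X : normedModType R}.

(* Supremum over f in K of a nonnegative quantity F f, with the convention
   that it is 0 when K is empty (0 is adjoined; harmless since F >= 0). *)
Definition supK (K : set X) (F : X -> R) : \bar R :=
  ereal_sup ([set 0%E] `|` [set (F f)%:E | f in K]).

Definition cheb_radius (K : set X) : \bar R :=
  ereal_inf [set supK K (fun f => `|f - g|) | g in [set: X]].

Definition span_fam (n : nat) (v : 'I_n -> X) : set X :=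
  [set x | exists c : 'I_n -> R, x = \sum_(i < n) c i *: v i].

Definition lin_indep (n : nat) (v : 'I_n -> X) : Prop :=
  forall c : 'I_n -> R, \sum_(i < n) c i *: v i = 0 -> forall i, c i = 0.

Definition subspace_dim (n : nat) (Y : set X) : Prop :=
  exists v : 'I_n -> X, lin_indep v /\ Y = span_fam v.

Definition dist_to (f : X) (Y : set X) : \bar R :=
  ereal_inf [set (`|f - g|)%:E | g in Y].

Definition kolmogorov_width (K : set X) (n : nat) : \bar R :=
  if n is 0 then supK K (fun f => `|f|)
  else ereal_inf [set ereal_sup ([set 0%E] `|` [set dist_to f Y | f in K])
                 | Y in [set Y | subspace_dim n Y]].

Definition is_norm (k : nat) (N : 'rV[R]_k -> R) : Prop :=
  [/\ forall y, 0 <= N y,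
      forall y, N y = 0 -> y = 0,
      forall (a : R) y, N (a *: y) = `|a| * N y
    & forall y y', N (y + y') <= N y + N y'].

Definition unit_ball (k : nat) (N : 'rV[R]_k -> R) : set 'rV[R]_k :=
  [set y | N y <= 1].

(* Phi : B_{Y_k} -> X is gamma-Lipschitz (values off the ball are irrelevant) *)
Definition lipschitz_on_ball (gamma : R) (k : nat) (N : 'rV[R]_k -> R)
    (Phi : 'rV[R]_k -> X) : Prop :=
  forall y y', unit_ball N y -> unit_ball N y' ->
    `|Phi y - Phi y'| <= gamma * N (y - y').

Definition lip_width_fixed (gamma : R) (K : set X) (k : nat)
    (N : 'rV[R]_k -> R) : \bar R :=
  ereal_inf [set ereal_sup ([set 0%E] `|`
                 [set ereal_inf [set (`|f - Phi y|)%:E | y in unit_ball N]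
                 | f in K])
            | Phi in [set Phi | lipschitz_on_ball gamma N Phi]].

Definition lipschitz_width (gamma : R) (K : set X) (n : nat) : \bar R :=
  ereal_inf [set d | exists k : nat, (1 <= k <= n)%N /\
               exists N : 'rV[R]_k -> R, is_norm N /\ d = lip_width_fixed gamma K N].

End Widths.

(* Main.v *)
Require Import Defs.
From HB Require Import structures.
From mathcomp Require Import all_boot all_order all_algebra.
From mathcomp Require Import all_classical all_reals all_analysis.
Import Order.TTheory GRing.Theory Num.Theory.
Import numFieldNormedType.Exports.
Local Open Scope classical_set_scope.
Local Open Scope ring_scope.

Section Aux.
Context {R : realType} {X : normedModType R}.

Lemma net_exists (K : set X) (hK : compact K) (e : R) : 0 < e ->
  exists s : seq X, (forall x, x \in s -> K x) /\
    forall f, K f -> exists2 x, x \in s & `|f - x| <= e.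
Proof.
move=> e0.
have := hK; rewrite compact_cover => /(_ X K (fun x => ball x e)).
case.
- by move=> i _; exact: ball_open.
- by move=> f Kf; exists f => //; exact: ballxx.
move=> D' sub cov; exists (finmap.enum_fset D'); split.
  by move=> x xD; have := sub x xD; rewrite inE.
move=> f /cov [x xD]; rewrite -ball_normE /ball_ /= => hx.
by exists x => //; rewrite distrC ltW.
Qed.

Lemma ll_nonneg (gamma : R) (K : set X) n : (0 <= lipschitz_width gamma K n)%E.
Proof.
apply/ereal_infP => y [k [_ [N [_ ->]]]].
apply/ereal_infP => z [Phi _ <-].
by apply: le_ereal_sup_tmp; exists 0%E => //; left.
Qed.

Lemma construct (K : set X) (gamma delta e : R) (g : X) (s : seq X) :
  0 <= gamma -> 0 < delta -> 0 <= e ->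
  (forall x, x \in s -> `|x - g| <= gamma + delta) ->
  (forall f, K f -> exists2 x, x \in s & `|f - x| <= e) ->
  forall n, ((size s).+1 <= n)%N ->
  (lipschitz_width gamma K n <= (e + delta)%:E)%E.
Proof.
move=> g0 d0 e0 hs hnet n hn.
set k := (size s).+1.
pose N := fun y : 'rV[R]_k => \sum_(i < k) `|y ord0 i|.
pose t := gamma / (gamma + delta).
have gd0 : 0 < gamma + delta by rewrite ltr_wpDl.
have t0 : 0 <= t by rewrite divr_ge0 // ltW.
have tgd : t * (gamma + delta) = gamma by rewrite /t mulfVK // gt_eqF.
pose v := fun i : 'I_k => nth g s i - g.
have hv : forall i, `|v i| <= gamma + delta.
  move=> i; rewrite /v; case: (ltnP i (size s)) => hi.
    by apply: hs; apply: mem_nth.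
  by rewrite nth_default // subrr normr0 ltW.
pose Phi := fun y : 'rV[R]_k => g + \sum_(i < k) (t * y ord0 i) *: v i.
have normN : is_norm N.
  split.
  - by move=> y; apply: sumr_ge0 => i _.
  - move=> y hy; apply/rowP => j; rewrite mxE.
    have := @psumr_eq0P _ _ xpredT (fun i => `|y ord0 i|) (fun i _ => normr_ge0 _) hy j isT.
    by move/eqP; rewrite normr_eq0 => /eqP; rewrite (_ : 0%R = ord0) //; apply/val_inj.
  - by move=> a y; rewrite /N mulr_sumr; apply: eq_bigr => i _; rewrite mxE normrM.
  - move=> y y'; rewrite /N -big_split; apply: ler_sum => i _; rewrite mxE.
    exact: ler_normD.
have lipPhi : lipschitz_on_ball gamma N Phi.
  move=> y y' _ _; rewrite /Phi opprD addrACA subrr add0r -sumrB.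
  rewrite (le_trans (ler_norm_sum _ _ _)) // /N mulr_sumr; apply: ler_sum => i _.
  rewrite -scalerBl -mulrBr normrZ normrM (ger0_norm t0) !mxE.
  have := ler_wpM2l (mulr_ge0 t0 (normr_ge0 (y ord0 i - y' ord0 i))) (hv i).
  move=> h; apply: (le_trans h); rewrite mulrAC tgd mulrC //.
have key : forall f, K f -> exists2 y, unit_ball N y & `|f - Phi y| <= e + delta.
  move=> f Kf; have [x xs hfx] := hnet f Kf.
  have hj : (index x s < k)%N by rewrite /k ltnS ltnW // index_mem.
  pose J : 'I_k := Ordinal hj.
  pose ej := \row_(i < k) ((i == J)%:R : R).
  have vJ : v J = x - g by rewrite /v /= nth_index.
  exists ej.
    rewrite /unit_ball /= /N (bigD1 J) //= big1 ?addr0.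
      by rewrite mxE eqxx normr1.
    by move=> i /negbTE hi; rewrite mxE hi normr0.
  have -> : Phi ej = g + t *: (x - g).
    rewrite /Phi (bigD1 J) //= big1 ?addr0.
      by rewrite mxE eqxx mulr1 vJ.
    by move=> i /negbTE hi; rewrite mxE hi mulr0 scale0r.
  have -> : f - (g + t *: (x - g)) = (f - x) + (1 - t) *: (x - g).
    by rewrite scalerBl scale1r -[(x - g) - _]addrA subrKA opprD.
  rewrite (le_trans (ler_normD _ _)) // lerD // normrZ.
  have t1 : t <= 1 by rewrite /t ler_pdivrMr // mul1r lerDl ltW.
  rewrite ger0_norm ?subr_ge0 //.
  have := ler_wpM2l (_ : 0 <= 1 - t) (hs x xs); rewrite subr_ge0 => /(_ t1) h.
  by apply: (le_trans h); rewrite mulrBl mul1r tgd addrC addKr.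
apply: ge_ereal_inf; exists (lip_width_fixed gamma K N).
  by exists k; split; [rewrite /k; apply/andP; split | exists N; split].
apply: ge_ereal_inf; eexists; first by exists Phi.
apply/ereal_supP => z [->|[f Kf <-]].
  by rewrite lee_fin addr_ge0 // ltW.
apply: ge_ereal_inf; have [y yb hy] := key f Kf.
by exists (`|f - Phi y|)%:E; [exists y | rewrite lee_fin].
Qed.

End Aux.

Theorem corollary5p3 (R : realType) (X : completeNormedModType R) (K : set X)
    (hK : compact K) (n0 : nat) (gamma : R)
    (hgamma : (kolmogorov_width K n0 + cheb_radius K <= gamma%:E)%E) :
  (fun n => lipschitz_width gamma K n) @ \oo --> 0%E.
Proof.
have kol0 : (0 <= kolmogorov_width K n0)%E.
  case: n0 {hgamma} => [|m] /=.
    by apply: le_ereal_sup_tmp; exists 0%E => //; left.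
  apply/ereal_infP => y [Y _ <-].
  by apply: le_ereal_sup_tmp; exists 0%E => //; left.
have chg : (cheb_radius K <= gamma%:E)%E.
  by apply: le_trans hgamma; apply: lee_paddl.
have ch0 : (0 <= cheb_radius K)%E.
  apply/ereal_infP => y [g _ <-].
  by apply: le_ereal_sup_tmp; exists 0%E => //; left.
have g0 : 0 <= gamma by rewrite -lee_fin (le_trans ch0 chg).
have key : forall e, 0 < e -> exists k, forall n, (k <= n)%N ->
    (lipschitz_width gamma K n <= (e + e)%:E)%E.
  move=> e e0.
  have : (cheb_radius K < (gamma + e)%:E)%E.
    by apply: (le_lt_trans chg); rewrite lte_fin ltrDl.
  move/ereal_inf_lt => [y [g _ <-]] hy.
  have hg : forall f, K f -> `|f - g| <= gamma + e.
    move=> f Kf; rewrite -lee_fin; apply: ltW; apply: le_lt_trans hy.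
    by apply: le_ereal_sup_tmp; exists (`|f - g|)%:E => //; right; exists f.
  have [s [sK snet]] := @net_exists R X K hK e e0.
  exists (size s).+1 => n hn.
  apply: (@construct R X K gamma e e g s g0 e0 (ltW e0) _ snet n hn).
  by move=> x /sK; exact: hg.
apply/fine_cvgP; split.
  have [k hk] := key 1 ltr01.
  apply: filterS (nbhs_infty_ge k) => n hn.
  rewrite ge0_fin_numE ?ll_nonneg //.
  by apply: le_lt_trans (hk n hn) _; rewrite ltey.
apply/cvgrPdist_le => eps eps0.
have [k hk] := key (eps / 2) (divr_gt0 eps0 (ltr0Sn _ 1)).
apply: filterS (nbhs_infty_ge k) => n hn /=.
have := ll_nonneg gamma K n; have := hk n hn.
case: (lipschitz_width gamma K n) => [r| |] //=; rewrite !lee_fin.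
by move=> h1 h0; rewrite sub0r normrN ger0_norm // (le_trans h1) // -splitr.
Qed.
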